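(* In the isotropic setting below, fix $r>0$ and $F,F_p\in\mathrm{GL}^+(3)$, and let $C_p=F_p^TF_p$, $U_p=\sqrt{C_p}$. Then $$-F_p^{-1}\,\mathcal N_r(\Sigma_e)\,F_p^{-T}=-U_p^{-1}\,\mathcal N_r(\mathring\Sigma)\,U_p^{-1}.$$ Consequently, for a differentiable curve $t\mapsto F_p(t)$ at fixed $F$, the Lion flow rule $\frac{d}{dt}[C_p^{-1}]\in-F_p^{-1}\mathcal N_r(\Sigma_e)F_p^{-T}$ holds if and only if the Grandi–Stefanelli flow rule $\sqrt{C_p}\,\frac{d}{dt}[C_p^{-1}]\,\sqrt{C_p}\in-\mathcal N_r(\mathring\Sigma)$ holds; the latter depends on $C$ and $C_p$ only.
   Context: $W:\mathrm{GL}^+(3)\to\mathbb{R}$ objective and isotropic ($W(QFR)=W(F)$, $Q,R\in\mathrm{SO}(3)$), written $W(F_e)=\Psi(I_1(C_e),I_2(C_e),I_3(C_e))$ with $\Psi\in C^1$; $\widetilde W(X)=\Psi(\mathrm{tr}X,\mathrm{tr}(\mathrm{Cof}X),\det X)$. $F_e=FF_p^{-1}$, $C=F^TF$, $C_e=F_e^TF_e$. $\langle X,Y\rangle=\mathrm{tr}(XY^T)$, $\|\cdot\|$ Frobenius norm, $D$ gradient, $\mathrm{dev}_3X=X-\frac13\mathrm{tr}(X)\mathbb{1}$, $\mathrm{sym}X=\frac12(X+X^T)$. $\Sigma_e=F_e^TDW(F_e)$ (symmetric). $\mathring\Sigma:=2\,U_p^{-1}\mathrm{sym}[C\,D\widetilde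 W(CC_p^{-1})]U_p^{-1}$. For $r>0$ and symmetric $S$: $\mathcal N_r(S)=\{0\}$ if $\|\mathrm{dev}_3S\|<r$, $\{\lambda\,\mathrm{dev}_3S/\|\mathrm{dev}_3S\|:\lambda\ge0\}$ if $\|\mathrm{dev}_3S\|=r$, $\emptyset$ if $\|\mathrm{dev}_3S\|>r$ (the subdifferential of the indicator function of $\{\|\mathrm{dev}_3S\|\le r\}$). $M\mathcal AN=\{MXN:X\in\mathcal A\}$. *)

(* Defs.v *)
From Stdlib Require Import Reals.
Open Scope R_scope.

Inductive idx : Type := i1 | i2 | i3.

Definition Mat := idx -> idx -> R.
Definition Vec := idx -> R.

Definition sum3 (f : idx -> R) : R := f i1 + f i2 + f i3.

Definition mmul (A B : Mat) : Mat := fun i j => sum3 (fun k => A i k * B k j).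
Definition trans (A : Mat) : Mat := fun i j => A j i.
Definition madd (A B : Mat) : Mat := fun i j => A i j + B i j.
Definition mopp (A : Mat) : Mat := fun i j => - A i j.
Definition mscal (a : R) (A : Mat) : Mat := fun i j => a * A i j.
Definition mzero : Mat := fun _ _ => 0.
Definition mid : Mat := fun i j => match i, j with
  | i1, i1 | i2, i2 | i3, i3 => 1 | _, _ => 0 end.

Definition tr (A : Mat) : R := A i1 i1 + A i2 i2 + A i3 i3.

Definition det (A : Mat) : R :=
    A i1 i1 * (A i2 i2 * A i3 i3 - A i2 i3 * A i3 i2)
  - A i1 i2 * (A i2 i1 * A i3 i3 - A i2 i3 * A i3 i1)
  + A i1 i3 * (A i2 i1 * A i3 i2 - A i2 i2 * A i3 i1).

Definition nxt (i : idx) : idx := match i with i1 => i2 | i2 => i3 | i3 => i1 end.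

(* Cofactor matrix: Cof A = det(A) A^{-T} for invertible A *)
Definition cof (A : Mat) : Mat := fun i j =>
  A (nxt i) (nxt j) * A (nxt (nxt i)) (nxt (nxt j))
  - A (nxt i) (nxt (nxt j)) * A (nxt (nxt i)) (nxt j).

Definition minv (A : Mat) : Mat := mscal (/ det A) (trans (cof A)).

Definition inner (X Y : Mat) : R := tr (mmul X (trans Y)).
Definition mnorm (X : Mat) : R := sqrt (inner X X).

Definition GLplus (A : Mat) : Prop := det A > 0.
Definition symmetric (A : Mat) : Prop := trans A = A.
Definition posdef (A : Mat) : Prop :=
  forall x : Vec, (x i1 <> 0 \/ x i2 <> 0 \/ x i3 <> 0) ->
    sum3 (fun i => sum3 (fun j => x i * A i j * x j)) > 0.
Definition is_sqrt_spd (U C : Mat) : Prop :=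
  symmetric U /\ posdef U /\ mmul U U = C.

Definition dev3 (X : Mat) : Mat := madd X (mopp (mscal (tr X / 3) mid)).
Definition msym (X : Mat) : Mat := mscal (1/2) (madd X (trans X)).

Definition Ncone (r : R) (S : Mat) (X : Mat) : Prop :=
  (mnorm (dev3 S) < r /\ X = mzero) \/
  (mnorm (dev3 S) = r /\
     exists lam : R, 0 <= lam /\ X = mscal (lam / mnorm (dev3 S)) (dev3 S)).

Definition negconj (M N : Mat) (A : Mat -> Prop) (X : Mat) : Prop :=
  exists Y, A Y /\ X = mopp (mmul M (mmul Y N)).

Definition is_gradient (f : Mat -> R) (X G : Mat) : Prop :=
  forall eps, eps > 0 -> exists delta, delta > 0 /\
    forall H, mnorm H < delta ->
      Rabs (f (madd X H) - f X - inner G H) <= eps * mnorm H.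

Definition norm3 (a b c : R) : R := sqrt (a*a + b*b + c*c).
Definition cont3 (g : R -> R -> R -> R) : Prop :=
  forall x y z eps, eps > 0 -> exists delta, delta > 0 /\
    forall a b c, norm3 (a - x) (b - y) (c - z) < delta ->
      Rabs (g a b c - g x y z) < eps.
Definition C1_3 (Psi : R -> R -> R -> R) : Prop :=
  exists d1 d2 d3 : R -> R -> R -> R,
    cont3 d1 /\ cont3 d2 /\ cont3 d3 /\
    forall x y z eps, eps > 0 -> exists delta, delta > 0 /\
      forall h k l, norm3 h k l < delta ->
        Rabs (Psi (x+h) (y+k) (z+l) - Psi x y z
              - (d1 x y z * h + d2 x y z * k + d3 x y z * l)) <= eps * norm3 h k l.

Definition Wtilde (Psi : R -> R -> R -> R) (X : Mat) : R :=
  Psi (tr X) (tr (cof X)) (det X).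
Definition Wfun (Psi : R -> R -> R -> R) (Fe : Mat) : R :=
  Wtilde Psi (mmul (trans Fe) Fe).

(* Sigma_e = F_e^T DW(F_e), with Ge = DW(F_e) *)
Definition Sigma_e (Fe Ge : Mat) : Mat := mmul (trans Fe) Ge.
(* ring-Sigma = 2 Up^{-1} sym[C DW~(C Cp^{-1})] Up^{-1}, with Gt = DW~(C Cp^{-1}) *)
Definition Sigma_ring (Up C Gt : Mat) : Mat :=
  mscal 2 (mmul (minv Up) (mmul (msym (mmul C Gt)) (minv Up))).

(* Main.v *)
Require Import Defs.
From Stdlib Require Import Reals Lra Psatz FunctionalExtensionality.
Open Scope R_scope.

Lemma Mat_ext (A B : Mat) : (forall i j, A i j = B i j) -> A = B.
Proof. intro H. extensionality i. extensionality j. apply H. Qed.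

Ltac mat_ring := apply Mat_ext; intros i j; destruct i, j;
  unfold mmul, trans, madd, mopp, mscal, mzero, mid, sum3, cof, det, tr, nxt; simpl; ring.

Infix "**" := mmul (at level 40, left associativity).

Lemma mmul_assoc A B C : A ** B ** C = A ** (B ** C). Proof. mat_ring. Qed.
Lemma mmul_mid_l A : mid ** A = A. Proof. mat_ring. Qed.
Lemma mmul_mid_r A : A ** mid = A. Proof. mat_ring. Qed.
Lemma trans_mmul A B : trans (A ** B) = trans B ** trans A. Proof. mat_ring. Qed.
Lemma trans_trans A : trans (trans A) = A. Proof. mat_ring. Qed.
Lemma trans_mid : trans mid = mid. Proof. mat_ring. Qed.
Lemma det_trans A : det (trans A) = det A. Proof. unfold det, trans; ring. Qed.
Lemma det_mid : det mid = 1. Proof. unfold det, mid; ring. Qed.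
Lemma det_mmul A B : det (A ** B) = det A * det B. Proof. unfold det, mmul, sum3; ring. Qed.
Lemma cof_mmul A B : cof (A ** B) = cof A ** cof B. Proof. mat_ring. Qed.
Lemma cof_mid : cof mid = mid. Proof. mat_ring. Qed.
Lemma tr_comm A B : tr (A ** B) = tr (B ** A). Proof. unfold tr, mmul, sum3; ring. Qed.

Lemma minv_r A : det A <> 0 -> A ** minv A = mid.
Proof. intro H. apply Mat_ext; intros i j; destruct i, j;
  unfold minv, mmul, trans, mscal, mid, sum3, cof, nxt; unfold det in *; simpl; field; auto. Qed.
Lemma minv_l A : det A <> 0 -> minv A ** A = mid.
Proof. intro H. apply Mat_ext; intros i j; destruct i, j;
  unfold minv, mmul, trans, mscal, mid, sum3, cof, nxt; unfold det in *; simpl; field; auto. Qed.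

Lemma det_nz_of A B : A ** B = mid -> det A <> 0.
Proof. intro H. intro H0. assert (det (A ** B) = 1) by (rewrite H; apply det_mid).
  rewrite det_mmul, H0 in H1. lra. Qed.

Lemma inv_unique A B : A ** B = mid -> minv A = B.
Proof. intro H. pose proof (det_nz_of _ _ H).
  rewrite <- (mmul_mid_r (minv A)), <- H, <- mmul_assoc, minv_l; auto. apply mmul_mid_l. Qed.

Lemma inv_comm A B : A ** B = mid -> B ** A = mid.
Proof. intro H. pose proof (det_nz_of _ _ H). rewrite <- (inv_unique _ _ H). apply minv_l; auto. Qed.

Lemma minv_trans A : det A <> 0 -> minv (trans A) = trans (minv A).
Proof. intro H. apply inv_unique. rewrite <- trans_mmul, minv_l; auto. apply trans_mid. Qed.

Lemma minv_mmul A B : det A <> 0 -> det B <> 0 -> minv (A ** B) = minv B ** minv A.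
Proof. intros. apply inv_unique.
  rewrite mmul_assoc, <- (mmul_assoc B), minv_r, mmul_mid_l, minv_r; auto. Qed.

Lemma sim_Wtilde Psi P Q X : P ** Q = mid -> Q ** P = mid ->
  Wtilde Psi (P ** X ** Q) = Wtilde Psi X.
Proof.
  intros H1 H2. unfold Wtilde. f_equal.
  - rewrite tr_comm, <- mmul_assoc, H2, mmul_mid_l. reflexivity.
  - rewrite !cof_mmul, tr_comm, <- mmul_assoc, <- cof_mmul, H2, cof_mid, mmul_mid_l. reflexivity.
  - rewrite !det_mmul. rewrite Rmult_comm, <- Rmult_assoc, <- det_mmul, H2, det_mid. ring.
Qed.

Definition curve (X : Mat) (s : R) (Q R0 : Mat) : Mat :=
  madd X (madd (mscal s Q) (mscal (s*s) R0)).

Lemma inner_curve G s Q R0 :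
  inner G (madd (mscal s Q) (mscal (s*s) R0)) = s * inner G Q + s * s * inner G R0.
Proof. unfold inner, tr, mmul, trans, madd, mscal, sum3; ring. Qed.

Lemma inner_self_nonneg A : 0 <= inner A A.
Proof. unfold inner, tr, mmul, trans, sum3; nra. Qed.

Lemma term_bound s q r : 0 < s <= 1 ->
  0 <= s*s*(2*q*q+2*r*r) - (s*q+s*s*r)*(s*q+s*s*r).
Proof. intros [H1 H2].
  assert (0 <= (q - s*r)*(q-s*r) + (2 - 2*s*s)*(r*r)).
  { assert (0 <= 2 - 2*s*s) by nra. assert (0 <= r*r) by nra.
    apply Rplus_le_le_0_compat; [pose proof (Rle_0_sqr (q - s*r)); unfold Rsqr in *; lra| apply Rmult_le_pos; auto]. }
  assert (s*s*(2*q*q+2*r*r) - (s*q+s*s*r)*(s*q+s*s*r) = s*s*((q - s*r)*(q-s*r) + (2 - 2*s*s)*(r*r))) by ring.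
  rewrite H0. apply Rmult_le_pos; nra. Qed.

Lemma norm_curve_bound s Q R0 : 0 < s <= 1 ->
  mnorm (madd (mscal s Q) (mscal (s*s) R0)) <= s * sqrt (2 * inner Q Q + 2 * inner R0 R0).
Proof.
  intros Hs. unfold mnorm.
  assert (Hs0 : 0 <= s) by lra.
  replace (s * sqrt (2 * inner Q Q + 2 * inner R0 R0)) with (sqrt (s*s*(2 * inner Q Q + 2 * inner R0 R0))).
  2:{ rewrite sqrt_mult_alt by nra. rewrite sqrt_square by lra. reflexivity. }
  apply sqrt_le_1_alt.
  pose proof (fun i j => term_bound s (Q i j) (R0 i j) Hs) as T.
  pose proof (T i1 i1). pose proof (T i1 i2). pose proof (T i1 i3).
  pose proof (T i2 i1). pose proof (T i2 i2). pose proof (T i2 i3).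
  pose proof (T i3 i1). pose proof (T i3 i2). pose proof (T i3 i3).
  unfold inner, tr, mmul, trans, madd, mscal, sum3. lra.
Qed.

Lemma grad_curve f X G Q R0 : is_gradient f X G -> forall eps, eps > 0 ->
  exists s0, s0 > 0 /\ forall s, 0 < s < s0 ->
    Rabs (f (curve X s Q R0) - f X - s * inner G Q) <= eps * s.
Proof.
  intros Hg eps He.
  set (B := sqrt (2*inner Q Q + 2*inner R0 R0) + 1).
  assert (HB: B > 0) by (unfold B; pose proof (sqrt_pos (2*inner Q Q + 2*inner R0 R0)); lra).
  set (k := Rabs (inner G R0)).
  assert (Hk : 0 <= k) by apply Rabs_pos.
  destruct (Hg (eps/(2*B))) as [d [Hd Hd']].
  { apply Rdiv_lt_0_compat; lra. }
  exists (Rmin 1 (Rmin (d/B) (eps/(2*(k+1))))).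
  split.
  { apply Rmin_glb_lt; [lra|]. apply Rmin_glb_lt; apply Rdiv_lt_0_compat; lra. }
  intros s [Hs0 Hs1].
  assert (Hs1' : s <= 1) by (pose proof (Rmin_l 1 (Rmin (d/B) (eps/(2*(k+1))))); lra).
  assert (Hs2 : s < d / B).
  { pose proof (Rmin_r 1 (Rmin (d/B) (eps/(2*(k+1))))).
    pose proof (Rmin_l (d/B) (eps/(2*(k+1)))). lra. }
  assert (Hs3 : s < eps/(2*(k+1))).
  { pose proof (Rmin_r 1 (Rmin (d/B) (eps/(2*(k+1))))).
    pose proof (Rmin_r (d/B) (eps/(2*(k+1)))). lra. }
  set (H := madd (mscal s Q) (mscal (s*s) R0)).
  assert (Hn : mnorm H <= s * B).
  { pose proof (norm_curve_bound s Q R0 (conj Hs0 Hs1')). unfold B. fold H in H0. nra. }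
  assert (Hlt : mnorm H < d).
  { assert (s * B < d).
    { apply (Rmult_lt_compat_r B) in Hs2; auto. unfold Rdiv in Hs2.
      rewrite Rmult_assoc, Rinv_l in Hs2 by lra. lra. }
    lra. }
  specialize (Hd' H Hlt). unfold curve. fold H.
  replace (inner G H) with (s * inner G Q + s * s * inner G R0) in Hd' by (unfold H; symmetry; apply inner_curve).
  assert (E : f (madd X H) - f X - s * inner G Q =
    (f (madd X H) - f X - (s * inner G Q + s * s * inner G R0)) + s * s * inner G R0) by ring.
  rewrite E. eapply Rle_trans; [apply Rabs_triang|].
  rewrite Rabs_mult, Rabs_mult. fold k.
  rewrite (Rabs_right s) by lra.
  assert (A1 : eps / (2 * B) * mnorm H <= eps * s / 2).
  { assert (eps / (2*B) * mnorm H <= eps/(2*B) * (s*B)).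
    { apply Rmult_le_compat_l; auto. apply Rlt_le, Rdiv_lt_0_compat; lra. }
    assert (eps/(2*B)*(s*B) = eps*s/2) by (field; lra). lra. }
  assert (A2 : s * s * k <= eps * s / 2).
  { assert (s * k <= eps/2).
    { assert (s*(k+1) < eps/2).
      { apply (Rmult_lt_compat_r (k+1)) in Hs3; [|lra].
        assert (eps / (2*(k+1)) * (k+1) = eps/2) by (field; lra). lra. }
      nra. }
    nra. }
  lra.
Qed.

Lemma grad_eq f X G Q R0 f' Y G' Q' R' :
  is_gradient f X G -> is_gradient f' Y G' ->
  (forall s, 0 < s -> f (curve X s Q R0) - f X = f' (curve Y s Q' R') - f' Y) ->
  inner G Q = inner G' Q'.
Proof.
  intros H1 H2 Heq.
  destruct (Req_dec (inner G Q) (inner G' Q')) as [E|NE]; auto. exfalso.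
  set (a := inner G Q) in *. set (a' := inner G' Q') in *.
  set (dd := Rabs (a - a')).
  assert (Hd : dd > 0) by (apply Rabs_pos_lt; lra).
  destruct (grad_curve _ _ _ Q R0 H1 (dd/4)) as [s0 [Hs0 Hb0]]. lra.
  destruct (grad_curve _ _ _ Q' R' H2 (dd/4)) as [s1 [Hs1 Hb1]]. lra.
  set (s := Rmin s0 s1 / 2).
  assert (Hm : 0 < Rmin s0 s1) by (apply Rmin_glb_lt; lra).
  assert (Hsa : 0 < s < s0) by (unfold s; pose proof (Rmin_l s0 s1); lra).
  assert (Hsb : 0 < s < s1) by (unfold s; pose proof (Rmin_r s0 s1); lra).
  specialize (Hb0 s Hsa). specialize (Hb1 s Hsb). specialize (Heq s (proj1 Hsa)).
  assert (Z : s * (a' - a) = (f' (curve Y s Q' R') - f' Y - s * a') * (-1) + (f (curve X s Q R0) - f X - s * a))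
    by (rewrite Heq; unfold a, a'; ring).
  assert (Rabs (s * (a' - a)) <= dd/4*s + dd/4*s).
  { rewrite Z. eapply Rle_trans; [apply Rabs_triang|].
    unfold a, a' in *. rewrite Rabs_mult. replace (Rabs (-1)) with 1 by (unfold Rabs; destruct (Rcase_abs (-1)); lra). lra. }
  rewrite Rabs_mult, Rabs_right, Rabs_minus_sym in H by lra. fold dd in H. nra.
Qed.

Definition mk9 (a b c d e f g h k : R) : Mat := fun i j => match i, j with
 | i1,i1 => a | i1,i2 => b | i1,i3 => c
 | i2,i1 => d | i2,i2 => e | i2,i3 => f
 | i3,i1 => g | i3,i2 => h | i3,i3 => k end.
Definition cm (G X N : Mat) := inner G (madd (mmul N X) (mopp (mmul X N))).
Lemma comm_entries (G X : Mat) :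
  cm G X (mk9 0 1 0 0 0 0 0 0 0) = 0 ->
  cm G X (mk9 0 0 1 0 0 0 0 0 0) = 0 ->
  cm G X (mk9 0 0 0 1 0 0 0 0 0) = 0 ->
  cm G X (mk9 0 0 0 0 0 1 0 0 0) = 0 ->
  cm G X (mk9 0 0 0 0 0 0 1 0 0) = 0 ->
  cm G X (mk9 0 0 0 0 0 0 0 1 0) = 0 ->
  cm G X (mk9 1 (-1) 0 1 (-1) 0 0 0 0) = 0 ->
  cm G X (mk9 0 0 0 0 1 (-1) 0 1 (-1)) = 0 ->
  mmul X (trans G) = mmul (trans G) X.
Proof.
  unfold cm, inner, tr, mmul, madd, mopp, trans, mk9, sum3; simpl.
  intros. apply functional_extensionality; intro i; apply functional_extensionality; intro j.
  destruct i, j; lra.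
Qed.

Lemma comm_N Psi X G N : is_gradient (Wtilde Psi) X G -> N ** N = mzero -> cm G X N = 0.
Proof.
  intros HG HN. unfold cm.
  pose proof (grad_eq (Wtilde Psi) X G (madd (N ** X) (mopp (X ** N))) (mopp (N ** X ** N))
     (Wtilde Psi) X G mzero mzero HG HG) as E.
  rewrite E.
  - unfold inner, tr, mmul, trans, mzero, sum3; ring.
  - intros s _.
    assert (E1 : curve X s mzero mzero = X) by (unfold curve; mat_ring).
    rewrite E1.
    assert (E2 : curve X s (madd (N ** X) (mopp (X ** N))) (mopp (N ** X ** N)) =
       madd mid (mscal s N) ** X ** madd mid (mscal (-s) N)) by (unfold curve; mat_ring).
    rewrite E2.
    assert (E3 : forall a b, madd mid (mscal a N) ** madd mid (mscal b N) =
       madd (madd mid (mscal (a+b) N)) (mscal (a*b) (N ** N))) by (intros; mat_ring).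
    rewrite sim_Wtilde; [reflexivity| |].
    + rewrite E3, HN. replace (s + -s) with 0 by ring. mat_ring.
    + rewrite E3, HN. replace (-s + s) with 0 by ring. mat_ring.
Qed.

Lemma grad_comm Psi X G : is_gradient (Wtilde Psi) X G -> X ** trans G = trans G ** X.
Proof.
  intro HG. apply comm_entries; apply (comm_N Psi); auto; mat_ring.
Qed.

Lemma inner_ext A B : (forall E, inner A E = inner B E) -> A = B.
Proof.
  intro H.
  pose proof (H (mk9 1 0 0 0 0 0 0 0 0)). pose proof (H (mk9 0 1 0 0 0 0 0 0 0)).
  pose proof (H (mk9 0 0 1 0 0 0 0 0 0)). pose proof (H (mk9 0 0 0 1 0 0 0 0 0)).
  pose proof (H (mk9 0 0 0 0 1 0 0 0 0)). pose proof (H (mk9 0 0 0 0 0 1 0 0 0)).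
  pose proof (H (mk9 0 0 0 0 0 0 1 0 0)). pose proof (H (mk9 0 0 0 0 0 0 0 1 0)).
  pose proof (H (mk9 0 0 0 0 0 0 0 0 1)).
  unfold inner, tr, mmul, trans, mk9, sum3 in *; simpl in *.
  apply Mat_ext; intros i j; destruct i, j; lra.
Qed.

Lemma Ge_formula Psi P Pinv Fe Ge Gt :
  P ** Pinv = mid -> Pinv ** P = mid ->
  is_gradient (Wfun Psi) Fe Ge ->
  is_gradient (Wtilde Psi) (trans P ** (trans Fe ** Fe) ** trans Pinv) Gt ->
  Ge = Fe ** madd (P ** Gt ** Pinv) (trans (P ** Gt ** Pinv)).
Proof.
  intros H1 H2 HGe HGt.
  assert (T1 : trans P ** trans Pinv = mid) by (rewrite <- trans_mmul, H2; apply trans_mid).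
  assert (T2 : trans Pinv ** trans P = mid) by (rewrite <- trans_mmul, H1; apply trans_mid).
  apply inner_ext. intro E.
  pose proof (grad_eq (Wtilde Psi) (trans P ** (trans Fe ** Fe) ** trans Pinv) Gt
     (trans P ** madd (trans Fe ** E) (trans E ** Fe) ** trans Pinv)
     (trans P ** (trans E ** E) ** trans Pinv)
     (Wfun Psi) Fe Ge E mzero HGt HGe) as Q.
  rewrite <- Q.
  - unfold inner, tr, mmul, trans, madd, sum3; ring.
  - intros s _. unfold Wfun.
    rewrite !sim_Wtilde by assumption.
    replace (curve (trans P ** (trans Fe ** Fe) ** trans Pinv) s
       (trans P ** madd (trans Fe ** E) (trans E ** Fe) ** trans Pinv)
       (trans P ** (trans E ** E) ** trans Pinv))
     with (trans P ** (trans (curve Fe s E mzero) ** curve Fe s E mzero) ** trans Pinv)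
     by (unfold curve; mat_ring).
    rewrite !sim_Wtilde by assumption. reflexivity.
Qed.

Lemma cancel_tail A B Z : A ** B = mid -> A ** (B ** Z) = Z.
Proof. intro H. rewrite <- mmul_assoc, H. apply mmul_mid_l. Qed.
Lemma mmul_madd_l A B C : A ** madd B C = madd (A ** B) (A ** C). Proof. mat_ring. Qed.
Lemma mmul_madd_r A B C : madd A B ** C = madd (A ** C) (B ** C). Proof. mat_ring. Qed.
Lemma trans_madd A B : trans (madd A B) = madd (trans A) (trans B). Proof. mat_ring. Qed.
Lemma mmul_mopp_l A B : mopp A ** B = mopp (A ** B). Proof. mat_ring. Qed.
Lemma mmul_mopp_r A B : A ** mopp B = mopp (A ** B). Proof. mat_ring. Qed.
Lemma mopp_mopp A : mopp (mopp A) = A. Proof. mat_ring. Qed.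

Section Orth.
Variable Rr : Mat.
Hypothesis H1 : trans Rr ** Rr = mid.
Hypothesis H2 : Rr ** trans Rr = mid.

Lemma tr_conj S : tr (trans Rr ** S ** Rr) = tr S.
Proof. rewrite tr_comm, <- mmul_assoc, H2, mmul_mid_l. reflexivity. Qed.

Lemma dev3_conj S : dev3 (trans Rr ** S ** Rr) = trans Rr ** dev3 S ** Rr.
Proof.
  unfold dev3. rewrite tr_conj.
  assert (E : forall c, trans Rr ** madd S (mopp (mscal c mid)) ** Rr =
     madd (trans Rr ** S ** Rr) (mopp (mscal c (trans Rr ** Rr)))) by (intros; mat_ring).
  rewrite E, H1. reflexivity.
Qed.

Lemma mnorm_conj A : mnorm (trans Rr ** A ** Rr) = mnorm A.
Proof.
  unfold mnorm, inner. f_equal.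
  rewrite !trans_mmul, trans_trans. repeat rewrite mmul_assoc.

  rewrite (cancel_tail _ _ _ H2). rewrite tr_comm. repeat rewrite mmul_assoc.
  rewrite H2, mmul_mid_r. reflexivity.
Qed.

Lemma conj_back Y : Rr ** (trans Rr ** Y ** Rr) ** trans Rr = Y.
Proof. repeat rewrite mmul_assoc. rewrite (cancel_tail _ _ _ H2), H2. apply mmul_mid_r. Qed.

Lemma conj_inj A B : trans Rr ** A ** Rr = trans Rr ** B ** Rr -> A = B.
Proof. intro E. rewrite <- (conj_back A), <- (conj_back B), E. reflexivity. Qed.

Lemma Ncone_conj r S Y : Ncone r S Y <-> Ncone r (trans Rr ** S ** Rr) (trans Rr ** Y ** Rr).
Proof.
  unfold Ncone. rewrite dev3_conj, mnorm_conj.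
  assert (Z : trans Rr ** mzero ** Rr = mzero) by mat_ring.
  assert (Sc : forall c D, trans Rr ** mscal c D ** Rr = mscal c (trans Rr ** D ** Rr)) by (intros; mat_ring).
  split; intros [[Ha Hb]|[Ha [l [Hl Hb]]]].
  - left. split; auto. rewrite Hb; auto.
  - right. split; auto. exists l. split; auto. rewrite Hb, Sc. reflexivity.
  - left. split; auto. apply conj_inj. rewrite Hb, Z. reflexivity.
  - right. split; auto. exists l. split; auto. apply conj_inj. rewrite Hb, Sc. reflexivity.
Qed.
End Orth.

Lemma sqrt_facts Fp Up : det Fp <> 0 -> is_sqrt_spd Up (trans Fp ** Fp) ->
  det Up <> 0 /\ trans Up = Up /\ Up ** Up = trans Fp ** Fp.
Proof.
  intros HF [Hs [_ Hm]]. split; [|split; auto].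
  intro H0. assert (det (Up ** Up) = det (trans Fp ** Fp)) by (rewrite Hm; auto).
  rewrite !det_mmul, det_trans, H0 in H. apply HF. nra.
Qed.

Lemma part1 Psi r (F Fp Up Ge Gt : Mat) :
     GLplus Fp ->
     is_sqrt_spd Up (mmul (trans Fp) Fp) ->
     is_gradient (Wfun Psi) (mmul F (minv Fp)) Ge ->
     is_gradient (Wtilde Psi)
       (mmul (mmul (trans F) F) (minv (mmul (trans Fp) Fp))) Gt ->
     forall X : Mat,
       negconj (minv Fp) (trans (minv Fp))
         (Ncone r (Sigma_e (mmul F (minv Fp)) Ge)) X
       <->
       negconj (minv Up) (minv Up)
         (Ncone r (Sigma_ring Up (mmul (trans F) F) Gt)) X.
Proof.
  intros HFp HUp HGe HGt X.
  assert (dF : det Fp <> 0) by (unfold GLplus in HFp; lra).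
  destruct (sqrt_facts _ _ dF HUp) as [dU [sU mU]].
  set (Fi := minv Fp) in *. set (Ui := minv Up).
  assert (FFi : Fp ** Fi = mid) by (apply minv_r; auto).
  assert (FiF : Fi ** Fp = mid) by (apply minv_l; auto).
  assert (UUi : Up ** Ui = mid) by (apply minv_r; auto).
  assert (UiU : Ui ** Up = mid) by (apply minv_l; auto).
  assert (tFtFi : trans Fp ** trans Fi = mid) by (rewrite <- trans_mmul, FiF; apply trans_mid).
  assert (tFitF : trans Fi ** trans Fp = mid) by (rewrite <- trans_mmul, FFi; apply trans_mid).
  assert (sUi : trans Ui = Ui) by (unfold Ui; rewrite <- minv_trans, sU; auto).
  assert (Cinv : minv (trans Fp ** Fp) = Fi ** trans Fi).
  { rewrite minv_mmul, minv_trans; auto. rewrite det_trans; auto. }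
  assert (UiUi : Ui ** Ui = Fi ** trans Fi).
  { rewrite <- Cinv, <- mU. unfold Ui. rewrite minv_mmul; auto. }
  set (C := trans F ** F) in *.
  set (Fe := F ** Fi) in *.
  assert (X0e : trans Fp ** (trans Fe ** Fe) ** trans Fi = C ** minv (trans Fp ** Fp)).
  { rewrite Cinv. unfold Fe, C. rewrite trans_mmul. repeat rewrite mmul_assoc.
    rewrite (cancel_tail _ _ _ tFtFi). reflexivity. }
  rewrite <- X0e in HGt.
  pose proof (Ge_formula Psi Fp Fi Fe Ge Gt FFi FiF HGe HGt) as GeF.
  rewrite X0e, Cinv in HGt.
  pose proof (grad_comm Psi _ _ HGt) as HC.
  assert (HCt : forall Z, trans F ** (F ** (Fi ** (trans Fi ** (trans Gt ** Z)))) =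
                          trans Gt ** (trans F ** (F ** (Fi ** (trans Fi ** Z))))).
  { intro Z. assert (E := f_equal (fun M => M ** Z) HC). simpl in E. unfold C in E.
    repeat rewrite mmul_assoc in E. exact E. }
  set (Rr := Fp ** Ui).
  assert (RtR : trans Rr ** Rr = mid).
  { unfold Rr. rewrite trans_mmul, sUi. repeat rewrite mmul_assoc.
    rewrite <- (mmul_assoc (trans Fp)), <- mU, mmul_assoc, (cancel_tail _ _ _ UiU), UUi. auto. }
  assert (RRt : Rr ** trans Rr = mid).
  { unfold Rr. rewrite trans_mmul, sUi. repeat rewrite mmul_assoc.
    rewrite <- (mmul_assoc Ui), UiUi, !mmul_assoc, tFitF, mmul_mid_r, FFi. auto. }
  assert (HSig : trans Rr ** Sigma_e Fe Ge ** Rr = Sigma_ring Up C Gt).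
  { unfold Sigma_e, Sigma_ring. fold Ui.
    assert (E : forall A B, mscal 2 (A ** (msym B ** A)) = A ** madd B (trans B) ** A)
      by (intros; apply Mat_ext; intros i j; destruct i, j; unfold msym, mmul, trans, madd, mscal, sum3; simpl; field).
    rewrite E. rewrite GeF. unfold Rr, Fe, C.
    rewrite !trans_mmul, !trans_trans, sUi.
    rewrite !mmul_madd_l, !mmul_madd_r.
    repeat rewrite mmul_assoc.
    repeat (rewrite (cancel_tail _ _ _ tFtFi) || rewrite (cancel_tail _ _ _ FiF)).
    rewrite HCt.
    repeat (rewrite (cancel_tail _ _ _ tFitF) || rewrite (cancel_tail _ _ _ FiF)).
    reflexivity. }
  assert (FiR : Fi = Ui ** trans Rr).
  { unfold Rr. rewrite trans_mmul, sUi, <- mmul_assoc, UiUi, mmul_assoc, tFitF.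
    symmetry; apply mmul_mid_r. }
  assert (tFiR : trans Fi = Rr ** Ui).
  { rewrite FiR, trans_mmul, trans_trans, sUi. reflexivity. }
  assert (KEY : forall Y, Fi ** (Y ** trans Fi) = Ui ** ((trans Rr ** Y ** Rr) ** Ui)).
  { intro Y. rewrite tFiR. rewrite FiR at 1. repeat rewrite mmul_assoc. reflexivity. }
  unfold negconj. split.
  - intros [Y [HY HX]]. exists (trans Rr ** Y ** Rr). split.
    + rewrite <- HSig. apply Ncone_conj; auto.
    + rewrite HX, KEY. reflexivity.
  - intros [Y [HY HX]]. exists (Rr ** Y ** trans Rr).
    assert (B : trans Rr ** (Rr ** Y ** trans Rr) ** Rr = Y).
    { repeat rewrite mmul_assoc. rewrite (cancel_tail _ _ _ RtR), RtR. apply mmul_mid_r. }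
    split.
    + apply (Ncone_conj Rr RtR RRt). rewrite HSig, B. exact HY.
    + rewrite HX, KEY, B. reflexivity.
Qed.

Theorem mainTheorem9 (Psi : R -> R -> R -> R) (HPsi : C1_3 Psi) (r : R) (hr : 0 < r) :
  (* set identity *)
  (forall (F Fp Up Ge Gt : Mat),
     GLplus F -> GLplus Fp ->
     is_sqrt_spd Up (mmul (trans Fp) Fp) ->
     is_gradient (Wfun Psi) (mmul F (minv Fp)) Ge ->
     is_gradient (Wtilde Psi)
       (mmul (mmul (trans F) F) (minv (mmul (trans Fp) Fp))) Gt ->
     forall X : Mat,
       negconj (minv Fp) (trans (minv Fp))
         (Ncone r (Sigma_e (mmul F (minv Fp)) Ge)) X
       <->
       negconj (minv Up) (minv Up)
         (Ncone r (Sigma_ring Up (mmul (trans F) F) Gt)) X)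
  /\
  (* equivalence of the Lion and Grandi--Stefanelli flow rules *)
  (forall (F : Mat) (Fp : R -> Mat) (t : R) (Up Ge Gt D : Mat),
     GLplus F -> (forall s, GLplus (Fp s)) ->
     (forall s i j, derivable_pt (fun u => Fp u i j) s) ->
     (forall i j, derivable_pt_lim
        (fun u => minv (mmul (trans (Fp u)) (Fp u)) i j) t (D i j)) ->
     is_sqrt_spd Up (mmul (trans (Fp t)) (Fp t)) ->
     is_gradient (Wfun Psi) (mmul F (minv (Fp t))) Ge ->
     is_gradient (Wtilde Psi)
       (mmul (mmul (trans F) F) (minv (mmul (trans (Fp t)) (Fp t)))) Gt ->
     (negconj (minv (Fp t)) (trans (minv (Fp t)))
        (Ncone r (Sigma_e (mmul F (minv (Fp t))) Ge)) D
      <->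
      Ncone r (Sigma_ring Up (mmul (trans F) F) Gt) (mopp (mmul Up (mmul D Up))))).
Proof.
  split.
  - intros F Fp Up Ge Gt _ HFp HUp HGe HGt X.
    apply (part1 Psi r F Fp Up Ge Gt HFp HUp HGe HGt X).
  - intros F Fp t Up Ge Gt D _ HFp _ _ HUp HGe HGt.
    rewrite (part1 Psi r F (Fp t) Up Ge Gt (HFp t) HUp HGe HGt D).
    assert (dF : det (Fp t) <> 0) by (specialize (HFp t); unfold GLplus in HFp; lra).
    destruct (sqrt_facts _ _ dF HUp) as [dU _].
    assert (UUi : mmul Up (minv Up) = mid) by (apply minv_r; auto).
    assert (UiU : mmul (minv Up) Up = mid) by (apply minv_l; auto).
    unfold negconj. split.
    + intros [Y [HY HD]].
      replace (mopp (mmul Up (mmul D Up))) with Y; auto.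
      rewrite HD, mmul_mopp_l, mmul_mopp_r, mopp_mopp.
      repeat rewrite mmul_assoc. rewrite (cancel_tail _ _ _ UUi), UiU, mmul_mid_r. reflexivity.
    + intro HY. eexists. split; [exact HY|].
      rewrite mmul_mopp_l, mmul_mopp_r, mopp_mopp.
      repeat rewrite mmul_assoc. rewrite (cancel_tail _ _ _ UiU), UUi, mmul_mid_r. reflexivity.
Qed.
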